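(* Let $q$ be prime and let $S$ be the $k\times 2n$ generator matrix over $\mathbb{Z}_q$ of a stabilizer code on $n$ qudits with $k$ generators, and let $M\in\mathbb{Z}^{k\times 2n}$ be its invariant form. Then there exist integer vectors $\bar X_1,\dots,\bar X_{n-k},\bar Z_1,\dots,\bar Z_{n-k}\in\mathbb{Z}^{2n}$ such that (i) their reductions mod $q$ form a complete set of logical operators of the code, i.e. they commute mod $q$ with all rows of $S$, are independent of the stabilizers, and satisfy $\bar X_i\odot\bar Z_j\equiv\delta_{ij}$, $\bar X_i\odot\bar X_j\equiv\bar Z_i\odot\bar Z_j\equiv 0 \pmod q$ for all $i,j$; and (ii) each of them has symplectic product exactly $0$ over $\mathbb{Z}$ with every row of $M$. Moreover, constructing them does not change $M$.
   Context: $n$-qudit Paulis over $q$ levels are represented (up to phase) by exponent vectors $(a|b)\in\mathbb{Z}_q^{2n}$; integer lifts are in $\mathbb{Z}^{2n}$. Symplectic product: $u\odot v=\sum_{l=1}^n (v_{z,l}u_{x,l}-v_{x,l}u_{z,l})$, computed mod $q$ or over $\mathbb{Z}$. Two Paulis commute iff their symplectic product is $0 \bmod q$. Logical operators are elements of the normalizer of the stabilizer group not in the stabilizer group. An invariant form of $S$ is an integer matrix $M\equiv S\pmod q$ whose rows have pairwise integer symplectic product $0$ (obtained from the canonical form $(I_k\ X_2|Z_1\ Z_2)$ by adding to $Z_1$ the strictly lower triangular matrix $L$ with $L_{ij}=\phi(s_i)\odot\phi(s_j)$ over $\mathbb{Z}$ for $i>j$). *)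

(* Defs.v *)
From HB Require Import structures.
From mathcomp Require Import all_boot all_order all_algebra.
Set Implicit Arguments. Unset Strict Implicit. Unset Printing Implicit Defensive.
Import GRing.Theory Num.Theory.
Local Open Scope ring_scope.

(* A Pauli exponent vector (a|b) on n qudits is a row vector of length n+n:
   the first n entries are the x-part a, the last n the z-part b. *)

Definition symp (R : pzRingType) (n : nat) (u v : 'rV[R]_(n + n)) : R :=
  \sum_(l < n) (v 0 (rshift n l) * u 0 (lshift n l)
                - v 0 (lshift n l) * u 0 (rshift n l)).

Definition redq (q : nat) (m p : nat) (A : 'M[int]_(m, p)) : 'M['F_q]_(m, p) :=
  map_mx (fun z : int => z%:~R) A.

Definition stabilizer_code (q k n : nat) (S : 'M['F_q]_(k, n + n)) : Prop :=
  \rank S = k /\ forall i j : 'I_k, symp (row i S) (row j S) = 0.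

Definition invariant_form (q k n : nat) (S : 'M['F_q]_(k, n + n))
    (M : 'M[int]_(k, n + n)) : Prop :=
  redq q M = S /\ forall i j : 'I_k, symp (row i M) (row j M) = 0.

(* Main.v *)
Require Import Defs.
From HB Require Import structures.
From mathcomp Require Import all_boot all_order all_algebra.
From mathcomp Require Import zify.
Import GRing.Theory Num.Theory.
Set Implicit Arguments. Unset Strict Implicit. Unset Printing Implicit Defensive.
Local Open Scope ring_scope.

Section Symp.
Variable (R : comPzRingType) (n : nat).

Definition JJ : 'M[R]_(n + n) := block_mx 0 1%:M (-1%:M) 0.
Definition w m p (A : 'M[R]_(m, n + n)) (B : 'M[R]_(p, n + n)) := A *m JJ *m B^T.

Lemma wE m p (A : 'M[R]_(m, n + n)) (B : 'M[R]_(p, n + n)) i j :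
  w A B i j = symp (row i A) (row j B).
Proof.
rewrite /w /symp /JJ.
have -> : A *m block_mx 0 1%:M (-1%:M) 0 = row_mx (- rsubmx A) (lsubmx A).
  rewrite -{1}[A]hsubmxK mul_row_block !mulmx0 !mulmxN !mulmx1 add0r addr0 //.
rewrite -{1}(hsubmxK B) tr_row_mx.
rewrite mul_row_col !mxE addrC -big_split /=.
apply: eq_bigr => l _; by rewrite !mxE mulNr mulrC [A _ _ * _]mulrC.
Qed.

Lemma trJ : JJ^T = - JJ.
Proof.
by rewrite /JJ tr_block_mx opp_block_mx !trmx0 trmx1 linearN /= trmx1 !oppr0 opprK.
Qed.

Lemma wC m p (A : 'M[R]_(m, n + n)) (B : 'M[R]_(p, n + n)) :
  w B A = - (w A B)^T.
Proof. by rewrite /w !trmx_mul trmxK trJ mulNmx mulmxN opprK mulmxA. Qed.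

Lemma symp_alt (u : 'rV[R]_(n + n)) : symp u u = 0.
Proof. by apply: big1 => l _; rewrite mulrC subrr. Qed.

Lemma w_alt (u : 'rV[R]_(n + n)) : w u u = 0.
Proof. by apply/matrixP => i j; rewrite !ord1 wE symp_alt mxE. Qed.

Lemma wBl m p (A1 A2 : 'M[R]_(m, n + n)) (B : 'M[R]_(p, n + n)) :
  w (A1 - A2) B = w A1 B - w A2 B.
Proof. by rewrite /w !mulmxBl. Qed.

Lemma wDl m p (A1 A2 : 'M[R]_(m, n + n)) (B : 'M[R]_(p, n + n)) :
  w (A1 + A2) B = w A1 B + w A2 B.
Proof. by rewrite /w !mulmxDl. Qed.

Lemma wBr m p (A : 'M[R]_(m, n + n)) (B1 B2 : 'M[R]_(p, n + n)) :
  w A (B1 - B2) = w A B1 - w A B2.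
Proof. by rewrite /w linearB /= mulmxBr. Qed.

Lemma wMl m m' p (D : 'M[R]_(m', m)) (A : 'M[R]_(m, n + n)) (B : 'M[R]_(p, n + n)) :
  w (D *m A) B = D *m w A B.
Proof. by rewrite /w !mulmxA. Qed.

Lemma wMr m p p' (A : 'M[R]_(m, n + n)) (D : 'M[R]_(p', p)) (B : 'M[R]_(p, n + n)) :
  w A (D *m B) = w A B *m D^T.
Proof. by rewrite /w trmx_mul !mulmxA. Qed.

Lemma w0l m p (B : 'M[R]_(p, n + n)) : w (0 : 'M_(m, n + n)) B = 0.
Proof. by rewrite /w !mul0mx. Qed.

Lemma w_coll m1 m2 p (A1 : 'M[R]_(m1, n + n)) (A2 : 'M[R]_(m2, n + n)) (B : 'M[R]_(p, n + n)) :
  w (col_mx A1 A2) B = col_mx (w A1 B) (w A2 B).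
Proof. by rewrite /w !mul_col_mx. Qed.

Lemma w_colr m p1 p2 (A : 'M[R]_(m, n + n)) (B1 : 'M[R]_(p1, n + n)) (B2 : 'M[R]_(p2, n + n)) :
  w A (col_mx B1 B2) = row_mx (w A B1) (w A B2).
Proof. by rewrite /w tr_col_mx mul_mx_row. Qed.

Lemma JJ2 : JJ *m JJ = - 1%:M.
Proof.
rewrite /JJ mulmx_block !mulmx0 !mul0mx !mulmx1 !mul1mx !add0r !addr0.
by rewrite (scalar_mx_block n n) opp_block_mx !oppr0.
Qed.

End Symp.

Lemma map_JJ (R R' : comPzRingType) (f : {rmorphism R -> R'}) n :
  map_mx f (JJ R n) = JJ R' n.
Proof. by rewrite /JJ map_block_mx !map_mx0 map_mxN map_mx1. Qed.

Lemma map_w (R R' : comPzRingType) (f : {rmorphism R -> R'}) n m p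
   (A : 'M[R]_(m, n + n)) (B : 'M[R]_(p, n + n)) :
  map_mx f (w A B) = w (map_mx f A) (map_mx f B).
Proof. by rewrite /w !map_mxM map_JJ map_trmx. Qed.
Ltac simp0 := rewrite ?(mulmx0, mul0mx, subr0, sub0r, oppr0, addr0, add0r, subrr) //.

Section Field.
Variable (F : fieldType) (n : nat).
Local Notation w := (@w F n).
Local Notation J := (JJ F n).

Lemma J_free : row_free J.
Proof. by apply/row_freeP; exists (- J); rewrite mulmxN JJ2 opprK. Qed.

Lemma rank_full k m (S : 'M[F]_(k, n + n)) (X Z : 'M[F]_(m, n + n)) :
  row_free S -> w S X = 0 -> w S Z = 0 -> w X Z = 1%:M -> w X X = 0 ->
  w Z Z = 0 -> row_free (col_mx S (col_mx X Z)).
Proof.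
move=> fS hSX hSZ hXZ hXX hZZ; apply: inj_row_free => v hv.
rewrite -[v]hsubmxK -[rsubmx v]hsubmxK in hv *.
set a := lsubmx v in hv *; set b := lsubmx (rsubmx v) in hv *.
set c := rsubmx (rsubmx v) in hv *.
rewrite !mul_row_col in hv; clearbody a b c.
have hZX : w Z X = - 1%:M by rewrite wC hXZ trmx1.
have hb : b = 0.
  have := congr1 (fun Y => w Y Z) hv.
  by rewrite /= w0l !wDl !wMl hSZ hXZ hZZ !mulmx0 mulmx1 add0r addr0.
have hc : c = 0.
  have := congr1 (fun Y => w Y X) hv.
  rewrite /= w0l !wDl !wMl hSX hXX hZX !mulmx0 mulmxN mulmx1 !add0r.
  by move/eqP; rewrite oppr_eq0 => /eqP.
subst b c; move: hv; rewrite !mul0mx !addr0 => haS.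
have ha : a = 0 by apply: (row_free_inj fS); rewrite /= haS mul0mx.
by subst a; rewrite !row_mx0.
Qed.

Lemma extend_x k (S : 'M[F]_(k, n + n)) : row_free S -> (k < n)%N ->
  exists x : 'rV[F]_(n + n), w S x = 0 /\ row_free (col_mx S x).
Proof.
move=> fS ltkn.
pose K := kermx (S *m J)^T.
have rK : \rank K = (n + n - k)%N.
  by rewrite mxrank_ker mxrank_tr mxrankMfree ?J_free // (eqP fS).
have /row_subPn [i Hi] : ~~ (K <= S)%MS.
  apply/negP => /mxrankS; rewrite rK (eqP fS); lia.
exists (row i K); split.
  have : row i K *m (S *m J)^T = 0 by rewrite -row_mul mulmx_ker row0.
  by move/(congr1 trmx); rewrite trmx_mul trmxK trmx0.
apply: inj_row_free => v hv.
rewrite -[v]hsubmxK in hv *.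
set a := lsubmx v in hv *; set b := rsubmx v in hv *; clearbody a b.
rewrite mul_row_col in hv.
have [b0|bn0] := eqVneq b 0.
  subst b; rewrite mul0mx addr0 in hv.
  have ha : a = 0 by apply: (row_free_inj fS); rewrite /= hv mul0mx.
  by subst a; rewrite row_mx0.
exfalso; move/negP: Hi; apply.
have c0 : b 0 0 != 0.
  by apply: contraNneq bn0 => h; apply/eqP/matrixP => p r; rewrite !ord1 h mxE.
have -> : row i K = (- (b 0 0)^-1 *: a) *m S.
  rewrite -scalemxAl; move/eqP: hv; rewrite addr_eq0 => /eqP ->.
  rewrite [b]mx11_scalar mul_scalar_mx mxE eqxx mulr1n scalerN scaleNr opprK scalerA.
  by rewrite mulVf // scale1r.
exact: submxMl.
Qed.

Lemma extend_z k (S : 'M[F]_(k, n + n)) (x : 'rV[F]_(n + n)) :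
  row_free (col_mx S x) ->
  exists z : 'rV[F]_(n + n), w S z = 0 /\ w x z = 1%:M.
Proof.
move=> fS.
have fSJ : row_free (col_mx S x *m J).
  by rewrite /row_free mxrankMfree ?J_free.
have [P hP] := row_freeP fSJ.
pose e : 'M[F]_(k + 1, 1) := col_mx 0 1%:M.
exists (P *m e)^T.
have : w (col_mx S x) (P *m e)^T = e by rewrite /w trmxK !mulmxA hP mul1mx.
by rewrite w_coll => /eq_col_mx.
Qed.

Lemma symp_basis m : forall k (S : 'M[F]_(k, n + n)), row_free S ->
  (k + m <= n)%N || (m == 0)%N ->
  exists X Z : 'M[F]_(m, n + n),
    [/\ w S X = 0, w S Z = 0, w X Z = 1%:M, w X X = 0 & w Z Z = 0].
Proof.
elim: m => [|m IH] k S fS hkm.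
  by exists 0, 0; split; rewrite ?flatmx0 ?thinmx0 // [LHS]flatmx0 [RHS]flatmx0.
have ltkn : (k < n)%N by move: hkm; rewrite orbF; lia.
have [x [hSx fSx]] := extend_x fS ltkn.
have [z [hSz hxz]] := extend_z fSx.
have [X' [Z' [hSX hSZ hXZ hXX hZZ]]] : exists X Z : 'M[F]_(m, n + n),
    [/\ w (col_mx S x) X = 0, w (col_mx S x) Z = 0, w X Z = 1%:M, w X X = 0
      & w Z Z = 0].
  by apply: IH => //; move: hkm; rewrite orbF => h; apply/orP; left; lia.
move: hSX hSZ; rewrite !w_coll => /eqP; rewrite col_mx_eq0 => /andP[/eqP hSX' /eqP hxX'].
move/eqP; rewrite col_mx_eq0 => /andP[/eqP hSZ' /eqP hxZ'].
pose cX := w X' z; pose cZ := w Z' z.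
pose X2 := X' - cX *m x; pose Z2 := Z' - cZ *m x.
have hxx : w x x = 0 := w_alt x.
have hX'x : w X' x = 0 by rewrite wC hxX' trmx0 oppr0.
have hZ'x : w Z' x = 0 by rewrite wC hxZ' trmx0 oppr0.
have hzx : w z x = - 1%:M by rewrite wC hxz trmx1.
have hSX2 : w S X2 = 0 by rewrite wBr wMr hSX' hSx mul0mx subr0.
have hSZ2 : w S Z2 = 0 by rewrite wBr wMr hSZ' hSx mul0mx subr0.
have hxX2 : w x X2 = 0 by rewrite wBr wMr hxX' hxx mul0mx subr0.
have hxZ2 : w x Z2 = 0 by rewrite wBr wMr hxZ' hxx mul0mx subr0.
have hX2z : w X2 z = 0 by rewrite wBl wMl hxz mulmx1 subrr.
have hZ2z : w Z2 z = 0 by rewrite wBl wMl hxz mulmx1 subrr.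
have hX2Z2 : w X2 Z2 = 1%:M.
  rewrite /X2 /Z2 !wBl !wBr !wMl !wMr hXZ hX'x hxZ' hxx; simp0.
have hX2X2 : w X2 X2 = 0.
  by rewrite /X2 !wBl !wBr !wMl !wMr hXX hX'x hxX' hxx; simp0.
have hZ2Z2 : w Z2 Z2 = 0.
  by rewrite /Z2 !wBl !wBr !wMl !wMr hZZ hZ'x hxZ' hxx; simp0.
have hzZ2 : w z Z2 = 0.
  rewrite /Z2 wBr wMr hzx mulNmx mul1mx /cZ (wC Z').
  by rewrite subrr.
suff H : exists X Z : 'M[F]_(1 + m, n + n),
    [/\ w S X = 0, w S Z = 0, w X Z = 1%:M, w X X = 0 & w Z Z = 0] by [].
exists (col_mx x X2), (col_mx z Z2).
have hX2x : w X2 x = 0 by rewrite wC hxX2 trmx0 oppr0.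
rewrite !w_coll !w_colr hX2x hSx hSz hSX2 hSZ2 hxX2 hxZ2 hX2z hZ2z hX2Z2 hX2X2 hZ2Z2.
rewrite hzZ2 hxz hxx w_alt !row_mx0 !col_mx0.
split => //.
rewrite (scalar_mx_block 1 m) block_mxEv.
by [].
Qed.
End Field.

Lemma redqE (q m p : nat) (A : 'M[int]_(m, p)) :
  redq q A = map_mx (intmul (1 : 'F_q)) A.
Proof. by []. Qed.

Definition liftq (q : nat) (x : 'F_q) : int := (nat_of_ord x)%:Z.

Lemma liftqK (q : nat) (x : 'F_q) : intmul (1 : 'F_q) (liftq x) = x.
Proof. by rewrite /liftq -pmulrn natr_Zp. Qed.


Theorem lemma2 (q n k : nat) (Hq : prime q)
    (S : 'M['F_q]_(k, n + n)) (M : 'M[int]_(k, n + n))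
    (HS : stabilizer_code S) (HM : invariant_form S M) :
  exists Xb Zb : 'M[int]_((n - k)%N, n + n),
    (* (i) reductions mod q form a complete set of logical operators *)
    [/\ (forall (s : 'I_k) (i : 'I_(n - k)),
           symp (row s S) (row i (redq q Xb)) = 0 /\
           symp (row s S) (row i (redq q Zb)) = 0),
        \rank (col_mx S (col_mx (redq q Xb) (redq q Zb)))
          = (k + ((n - k) + (n - k)))%N,
        (forall i j : 'I_(n - k),
           [/\ symp (row i (redq q Xb)) (row j (redq q Zb)) = (i == j)%:R,
               symp (row i (redq q Xb)) (row j (redq q Xb)) = 0 &
               symp (row i (redq q Zb)) (row j (redq q Zb)) = 0]) &
      (* (ii) exact integer commutation with every row of M *)
        (forall (s : 'I_k) (i : 'I_(n - k)),
           symp (row s M) (row i Xb) = 0 /\ symp (row s M) (row i Zb) = 0)].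
Proof.
move: HS HM => [rS _] [redM _].
have fS : row_free S by rewrite /row_free rS.
have hkm : (k + (n - k) <= n)%N || (n - k == 0)%N.
  by case: (leqP k n) => h; apply/orP; [left|right]; lia.
have [Xf [Zf [hSX hSZ hXZ hXX hZZ]]] := symp_basis fS hkm.
pose B := M *m JJ int n.
have hB : map_mx (intmul (1 : 'F_q)) B = S *m JJ _ n.
  by rewrite map_mxM map_JJ -redqE redM.
have fB : row_free (S *m JJ 'F_q n) by rewrite /row_free mxrankMfree ?J_free // rS.
have [Pf hPf] := row_freeP fB.
pose P := map_mx (@liftq q) Pf.
have hmapl : forall a b (Y : 'M['F_q]_(a, b)),
    map_mx (intmul (1 : 'F_q)) (map_mx (@liftq q) Y) = Y.
  by move=> a b Y; apply/matrixP => i j; rewrite !mxE liftqK.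
pose D := B *m P.
pose Pi := (\det D)%:M - P *m \adj D *m B.
have hBPi : B *m Pi = 0.
  by rewrite /Pi mulmxBr mul_mx_scalar !mulmxA -/D mul_mx_adj mul_scalar_mx -scalemxAl subrr.
have hPi : map_mx (intmul (1 : 'F_q)) Pi = 1%:M - Pf *m (S *m JJ _ n).
  rewrite /Pi map_mxB map_scalar_mx -det_map_mx !map_mxM map_mx_adj /D !map_mxM.
  by rewrite -[map_mx _ M]/(redq q M) redM map_JJ hmapl hPf det1 adj1 mulmx1.
pose lift (Y : 'M['F_q]_(n - k, n + n)) := map_mx (@liftq q) Y *m Pi^T.
have key : forall Y : 'M['F_q]_(n - k, n + n), w S Y = 0 ->
    redq q (lift Y) = Y /\ w M (lift Y) = 0.
  move=> Y hSY; split.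
    rewrite redqE map_mxM -map_trmx hPi hmapl linearB /= trmx1 mulmxBr mulmx1.
    have : (w S Y)^T = 0 by rewrite hSY trmx0.
    rewrite /w trmx_mul trmxK trmx_mul mulmxA => h.
    by rewrite !trmx_mul !mulmxA h mul0mx subr0.
  by rewrite /w /lift trmx_mul trmxK mulmxA -/B hBPi mul0mx.
have [rX wX] := key _ hSX.
have [rZ wZ] := key _ hSZ.
exists (lift Xf), (lift Zf); rewrite rX rZ; split.
- by move=> s i; rewrite -!wE hSX hSZ !mxE.
- by have := rank_full fS hSX hSZ hXZ hXX hZZ; rewrite /row_free => /eqP.
- by move=> i j; rewrite -!wE hXZ hXX hZZ !mxE.
- by move=> s i; rewrite -!wE wX wZ !mxE.
Qed.
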